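(* Let $p$ be an odd prime and $n\ge1$ an integer, and let $K_n$ be the complete graph of order $n$. Put $q=\lfloor n/p\rfloor$, $r=n-qp$, $\psi=\max\{0,2r-p+1\}$, $\delta_s=1$ if $s$ is even and $0$ otherwise, and $\mathcal S=\mathcal S_1+\mathcal S_2$ with $$\mathcal S_1=\sum_{\substack{s=2\\ s\ne p}}^{r+1}(s-1-\delta_s)(s/p),\qquad \mathcal S_2=\sum_{\substack{s=r+2\\ s\ne p}}^{2r}(2r-s+1-\delta_s)(s/p).$$ Then $K_n$ is a Legendre cordial graph modulo $p$ if and only if $$\mathcal S=2nq-pq^2-q+\psi\quad\text{or}\quad \mathcal S=2nq-pq^2-q+\psi\pm2.$$
   Context: For an odd prime $p$ and an integer $a$ not divisible by $p$, $(a/p)$ denotes the Legendre symbol: $1$ if $a$ is a quadratic residue mod $p$, $-1$ otherwise. Empty sums equal $0$. For a simple connected graph $G$ of order $n$, a bijection $f:V(G)\to\{1,\dots,n\}$ is a Legendre cordial labeling modulo $p$ if the induced edge labeling $f_p^*:E(G)\to\{0,1\}$, defined by $f_p^*(uv)=0$ if $p\mid f(u)+f(v)$ or $((f(u)+f(v))/p)=-1$, and $f_p^*(uv)=1$ if $((f(u)+f(v))/p)=1$, satisfies $|e_{f_p^*}(0)-e_{f_p^*}(1)|\le1$, where $e_{f_p^*}(i)$ is the number of edges with label $i$. A graph admitting such a labeling is a Legendre cordial graph modulo $p$. *)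

(* Defs.v *)
From mathcomp Require Import all_boot all_order all_fingroup all_algebra.
Set Implicit Arguments. Unset Strict Implicit. Unset Printing Implicit Defensive.
Import Order.TTheory GRing.Theory Num.Theory.

Definition qres (p a : nat) : bool := [exists x : 'I_p, (x * x) %% p == a %% p].

Definition legendre (p a : nat) : int :=
  if p %| a then 0%R else if qres p a then 1%R else (-1)%R.

Definition simple_graph (n : nat) (e : rel 'I_n) : Prop :=
  irreflexive e /\ symmetric e.

(* Induced edge label f_p^*(uv) for the labeling f with values f u + 1 in
   {1..n}: 1 iff ((f u + f v)/p) = 1, else 0. *)
Definition edge_label (p n : nat) (f : {perm 'I_n}) (u v : 'I_n) : bool :=
  legendre p ((f u).+1 + (f v).+1) == 1%R.

Definition edge_count (p n : nat) (e : rel 'I_n) (f : {perm 'I_n}) (b : bool) : nat :=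
  #|[set uv : 'I_n * 'I_n | [&& uv.1 < uv.2, e uv.1 uv.2 & edge_label p f uv.1 uv.2 == b]]|.

Definition legendre_cordial_labeling (p n : nat) (e : rel 'I_n) (f : {perm 'I_n}) : bool :=
  (`|(edge_count p e f false)%:Z - (edge_count p e f true)%:Z| <= 1)%R.

Definition legendre_cordial (p n : nat) (e : rel 'I_n) : Prop :=
  exists f : {perm 'I_n}, legendre_cordial_labeling p e f.

Definition complete_graph (n : nat) : rel 'I_n := fun u v => u != v.

Definition delta (s : nat) : int := if odd s then 0%R else 1%R.

Definition S1 (p r : nat) : int :=
  (\sum_(2 <= s < r.+2 | s != p) ((s%:Z - 1 - delta s) * legendre p s))%R.

Definition S2 (p r : nat) : int :=
  (\sum_(r.+2 <= s < (2 * r).+1 | s != p)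
      (((2 * r)%:Z - s%:Z + 1 - delta s) * legendre p s))%R.
Arguments complete_graph n : clear implicits.

(* Main.v *)
Require Import Defs.
From mathcomp Require Import all_boot all_order all_fingroup all_algebra.
From mathcomp Require Import zify ring.
Import Order.TTheory GRing.Theory Num.Theory.
Set Warnings "-notation-overridden".

Section NT.
Variable p : nat.
Hypothesis hp : prime p.
Hypothesis hodd : odd p.

Local Open Scope ring_scope.

Definition g (s : nat) : int := if legendre p s == 1 then 1 else -1.

Lemma p_gt0 : (0 < p)%N. Proof. exact: prime_gt0. Qed.
Lemma p_gt2 : (2 < p)%N.
Proof. have := prime_gt1 hp. case: p hodd => [|[|[|]]] //. Qed.

Lemma legendre_mod s : legendre p s = legendre p (s %% p).
Proof. by rewrite /legendre /qres /dvdn !modn_mod. Qed.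

Lemma g_mod s : g s = g (s %% p).
Proof. by rewrite /g legendre_mod. Qed.

Lemma gE s : g s = legendre p s - (p %| s)%N%:R.
Proof.
rewrite /g /legendre; case: (p %| s)%N => //=.
case: (qres p s) => //.
Qed.

Lemma legendre_p : legendre p p = 0.
Proof. by rewrite /legendre dvdnn. Qed.

Definition h := p./2.
Lemma sq_lt (x : 'I_h) : (x.+1 * x.+1 %% p < p)%N.
Proof. by rewrite ltn_pmod ?p_gt0. Qed.
Definition sq (x : 'I_h) : 'I_p := Ordinal (sq_lt x).

Lemma h_lt (x : 'I_h) : (x.+1 < p)%N.
Proof. have := ltn_ord x; rewrite /h; have := odd_double_half p; rewrite hodd; lia. Qed.

Lemma sq_inj : injective sq.
Proof.
have Hp := odd_double_half p; rewrite hodd /= in Hp.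
have key : forall x y : 'I_h, (x <= y)%N -> sq x = sq y -> x = y.
  move=> x y le_xy /(congr1 val) /= /eqP.
  rewrite eq_sym eqn_mod_dvd; last by rewrite leq_mul.
  move=> H; apply/val_inj => /=.
  move: H; rewrite -[(y.+1 * _)%N]/(y.+1 ^ 2)%N -[(x.+1 * _)%N]/(x.+1 ^ 2)%N subn_sqr.
  rewrite Euclid_dvdM // => /orP [H|H].
  - have: (y.+1 - x.+1 < p)%N by have := h_lt y; lia.
    rewrite ltnNge; case: (posnP (y.+1 - x.+1)) => [?|pos]; first by lia.
    by rewrite dvdn_leq.
  - have : (y.+1 + x.+1 < p)%N.
      have := ltn_ord x; have := ltn_ord y; rewrite /h; lia.
    by rewrite ltnNge dvdn_leq.
move=> x y E; case: (leqP x y) => [le|lt]; first exact: key.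
by apply/esym/key => //; exact: ltnW.
Qed.

Lemma sqr_neg (y : nat) : (y <= p)%N -> (p - y) * (p - y) = y * y %[mod p].
Proof.
move=> le; have E : ((p - y) * (p - y) + (2 * y) * p = (p * 1) * p + y * y)%N.
  move: (subnK le); move: (p - y)%N => z Ez; rewrite -Ez; nia.
by rewrite -(modnMDl (2 * y)) addnC E modnMDl.
Qed.

Definition Q : {set 'I_p} := [set s : 'I_p | legendre p s == 1].

Lemma QE : Q = [set sq x | x in 'I_h].
Proof.
apply/setP => s; rewrite !inE; apply/idP/imsetP.
- rewrite /legendre; case: ifP => // ndvd.
  case: ifP => // /existsP [y /eqP Hy] _.
  rewrite (modn_small (ltn_ord s)) in Hy.
  have y0 : (0 < y)%N.
    rewrite lt0n; apply/negP => /eqP y0; by move: ndvd; rewrite /dvdn -Hy y0 mul0n !mod0n.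
  have Hp := odd_double_half p; rewrite hodd /= in Hp.
  case: (leqP y h) => [le|gt].
  + have lt : (y.-1 < h)%N by have := prednK y0; lia.
    exists (Ordinal lt) => //; apply/val_inj => /=.
    by rewrite prednK // Hy.
  + have lt : ((p - y).-1 < h)%N.
      have yp := ltn_ord y; have : (0 < p - y)%N by lia.
      move=> /prednK; rewrite /h in gt *; lia.
    exists (Ordinal lt) => //; apply/val_inj => /=.
    rewrite prednK; last by have := ltn_ord y; lia.
    by rewrite sqr_neg ?Hy // ltnW.
- move=> [x _ ->]; rewrite /sq /= -legendre_mod /legendre.
  have Hx := h_lt x.
  rewrite Euclid_dvdM // orbb /dvdn modn_small //=.
  have -> : qres p (x.+1 * x.+1) by apply/existsP; exists (Ordinal Hx).
  by [].
Qed.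

Lemma card_Q : #|Q| = h.
Proof. by rewrite QE card_imset ?card_ord //; exact: sq_inj. Qed.

Lemma sum_g_period : \sum_(s < p) g s = -1.
Proof.
rewrite (bigID (fun s : 'I_p => s \in Q)) /=.
rewrite (eq_bigr (fun _ => 1)); last by move=> s; rewrite inE /g => ->.
rewrite [X in _ + X](eq_bigr (fun _ => -1)); last first.
  by move=> s; rewrite inE /g => /negbTE ->.
rewrite !sumr_const.
have HC := cardC Q; rewrite card_ord card_Q in HC.
have Hp := odd_double_half p; rewrite hodd /= in Hp.
have -> : #|(fun i : 'I_p => i \notin Q)| = (p - h)%N.
  have E2 : #|(fun i : 'I_p => i \notin Q)| = #|[predC Q]| by apply: eq_card.
  rewrite E2; lia.
rewrite mulNrn card_Q; rewrite /h; lia.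
Qed.

Lemma sum_g_inj (phi : nat -> nat) :
  injective (fun i : 'I_p => phi i %% p)%N -> \sum_(i < p) g (phi i) = -1.
Proof.
move=> inj.
pose sig (i : 'I_p) : 'I_p := Ordinal (ltn_pmod (phi i) p_gt0).
have sinj : injective sig by move=> i j /(congr1 val) /= /inj.
rewrite (eq_bigr (fun i => g (sig i))); last by move=> i _; rewrite /= -g_mod.
by have := sum_g_period; rewrite (reindex_inj sinj).
Qed.

Lemma lin_inj c k : ~~ (p %| k)%N -> injective (fun i : 'I_p => (c + k * i) %% p)%N.
Proof.
move=> nk.
have key : forall i j : 'I_p, (i <= j)%N -> ((c + k * i) %% p = (c + k * j) %% p)%N -> i = j.
  move=> i j le /eqP; rewrite eqn_modDl eq_sym eqn_mod_dvd ?leq_mul2l ?le ?orbT //.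
  rewrite -mulnBr Euclid_dvdM // (negbTE nk) /= => H.
  apply/val_inj/eqP; rewrite eqn_leq le /=.
  case: (posnP (j - i)) => [|pos]; first by move/eqP; rewrite subn_eq0.
  have := dvdn_leq pos H; have := ltn_ord j; lia.
move=> i j E; case: (leqP i j) => [le|lt]; first exact: key.
by apply/esym/key => //; exact: ltnW.
Qed.

Lemma sum_g_shift c : \sum_(i < p) g (c + i) = -1.
Proof.
rewrite -(@sum_g_inj (fun i => c + 1 * i)%N); first by apply: eq_bigr => i _; rewrite mul1n.
apply: (@lin_inj c 1); rewrite dvdn1; have := p_gt2; lia.
Qed.

Lemma sum_g_shift2 c : \sum_(i < p) g (c + 2 * i) = -1.
Proof.
apply: (@sum_g_inj (fun i => c + 2 * i)%N); apply: (@lin_inj c 2); apply/negP => /dvdn_leq H.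
by have := p_gt2; have := H isT; lia.
Qed.


Lemma win1 m c (F : nat -> nat) : (forall i, F i = c + i)%N ->
  \sum_(m <= i < m + p) g (F i) = -1.
Proof.
move=> H; rewrite -{1}[m]add0n big_addn addKn big_mkord.
rewrite (eq_bigr (fun i : 'I_p => g ((c + m) + i))); first exact: sum_g_shift.
by move=> i _; rewrite H addnA [(c + i + m)%N]addnAC.
Qed.

Lemma win2 m c (F : nat -> nat) : (forall i, F i = c + 2 * i)%N ->
  \sum_(m <= i < m + p) g (F i) = -1.
Proof.
move=> H; rewrite -{1}[m]add0n big_addn addKn big_mkord.
rewrite (eq_bigr (fun i : 'I_p => g ((c + 2 * m) + 2 * i))); first exact: sum_g_shift2.
by move=> i _; rewrite H; congr (g _); lia.
Qed.

Definition A m := \sum_(0 <= a < m) \sum_(0 <= b < m) g (a.+1 + b.+1).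
Definition D m := \sum_(0 <= a < m) g (a.+1 + a.+1).
Definition F m := A m - D m.

Lemma A_step m : A (m + p) = A m - m%:R - (m + p)%:R.
Proof.
rewrite /A (@big_cat_nat _ _ _ m) ?leq_addr //=.
rewrite [X in _ + X]exchange_big /=.
rewrite [X in _ + X](eq_bigr (fun _ => -1)); last first.
  move=> b _; apply: (@win1 m b.+2) => i; lia.
rewrite (eq_bigr (fun a => \sum_(0 <= b < m) g (a.+1 + b.+1) - 1)); last first.
  move=> a _; rewrite (@big_cat_nat _ _ _ m) ?leq_addr //=.
  by rewrite (@win1 m a.+2) // => i; lia.
rewrite sumrB !sumr_const_nat !subn0.
by rewrite mulNrn.
Qed.

Lemma D_step m : D (m + p) = D m - 1.
Proof.
rewrite /D (@big_cat_nat _ _ _ m) ?leq_addr //=.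
by rewrite (@win2 m 2) // => i; lia.
Qed.

Lemma F_step m : F (m + p) = F m - (2 * m + p)%N%:R + 1.
Proof. rewrite /F A_step D_step; lia. Qed.

Lemma F_q r q : F (r + q * p) = F r - (2 * r * q + p * q ^ 2)%N%:R + q%:R.
Proof.
elim: q => [|q IH]; first by rewrite mul0n addn0; lia.
rewrite mulSn addnCA [(p + _)%N]addnC F_step IH; lia.
Qed.

Lemma F_succ m : F m.+1 = F m + 2 * \sum_(0 <= a < m) g (a.+1 + m.+1).
Proof.
rewrite /F /A /D !big_nat_recr //=.
rewrite (eq_bigr (fun a => \sum_(0 <= b < m) g (a.+1 + b.+1) + g (a.+1 + m.+1))); last first.
  by move=> a _; rewrite big_nat_recr.
rewrite big_split /=.
rewrite [X in _ + (X + _)](eq_bigr (fun b => g (b.+1 + m.+1))); last by move=> b _; rewrite addnC.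
ring.
Qed.


Definition S1' r := \sum_(2 <= s < r.+2) ((s%:Z - 1 - delta s) * legendre p s).
Definition S2' r := \sum_(r.+2 <= s < (2 * r).+2) (((2 * r)%:Z - s%:Z + 1 - delta s) * legendre p s).

Lemma S1E r : S1 p r = S1' r.
Proof.
rewrite /S1 /S1' big_mkcond /=; apply: eq_bigr => s _.
by case: eqP => // ->; rewrite legendre_p mulr0.
Qed.

Lemma S2E r : (1 <= r)%N -> S2 p r = S2' r.
Proof.
move=> r1; rewrite /S2 /S2' big_mkcond /= [in RHS]big_nat_recr /=; last by lia.
have -> : (((2 * r)%:Z - ((2 * r).+1)%:Z + 1 - delta (2 * r).+1) = 0).
  rewrite /delta /= mul2n odd_double /=; lia.
rewrite mul0r addr0; apply: eq_bigr => s _.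
by case: eqP => // ->; rewrite legendre_p mulr0.
Qed.


Lemma S_step r : (1 <= r)%N ->
  S1' r.+1 + S2' r.+1 = S1' r + S2' r + 2 * \sum_(0 <= a < r) legendre p (a.+1 + r.+1).
Proof.
move=> r1.
rewrite /S1' (big_nat_recr r.+2 2) //=.
rewrite /S2' [in RHS](@big_ltn _ _ _ r.+2); last by lia.
have -> : ((2 * r.+1).+2 = ((2 * r).+3).+1)%N by lia.
rewrite (big_nat_recr (2 * r).+3 r.+3) /=; last by lia.
rewrite (big_nat_recr (2 * r).+2 r.+3) /=; last by lia.
have -> : (((2 * r.+1)%N%:Z - (((2 * r)%N).+2)%:Z + 1 - delta ((2 * r)%N).+2) = 0).
  rewrite /delta /= negbK !mul2n odd_double /=; lia.
have -> : (((2 * r.+1)%N%:Z - (((2 * r)%N).+3)%:Z + 1 - delta ((2 * r)%N).+3) = 0).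
  rewrite /delta /= negbK !mul2n odd_double /=; lia.

rewrite !mul0r !addr0.
have -> : \sum_(r.+3 <= i < (2 * r).+2) (((2 * r.+1)%:Z - i%:Z + 1 - delta i) * legendre p i)
  = \sum_(r.+3 <= i < (2 * r).+2) (((2 * r)%:Z - i%:Z + 1 - delta i) * legendre p i)
  + \sum_(r.+3 <= i < (2 * r).+2) (2 * legendre p i).
  rewrite -big_split /=; apply: eq_bigr => i _.
  have -> : (2 * r.+1)%:Z = (2 * r)%:Z + 2 by lia.
  ring.
have -> : \sum_(0 <= a < r) legendre p (a.+1 + r.+1) =
          \sum_(r.+2 <= s < (2 * r).+2) legendre p s.
  rewrite -[r.+2]add0n big_addn.
  have -> : ((2 * r).+2 - r.+2 = r)%N by lia.
  by apply: eq_bigr => i _; congr (legendre p _); lia.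
rewrite (@big_ltn _ _ _ r.+2); last by lia.
rewrite -mulr_sumr.
have -> : (r.+2)%:Z = r%:Z + 2 by lia.
have -> : (2 * r)%:Z = 2 * r%:Z by lia.
rewrite /delta; ring.
Qed.

Lemma cnt m : (m.+1 < p)%N ->
  \sum_(0 <= a < m) ((p %| a.+1 + m.+1)%N%:R : int) = (p <= (2 * m).+1)%N%:R.
Proof.
move=> lt.
have E : forall a, (a < m)%N -> (p %| a.+1 + m.+1)%N = (a.+1 + m.+1 == p)%N.
  move=> a am; apply/idP/eqP => [/dvdnP [k Hk]|->]; last exact: dvdnn.
  case: k Hk => [|[|k]] Hk; rewrite ?mulSn in Hk; lia.
rewrite big_mkord.
rewrite (eq_bigr (fun a : 'I_m => ((a.+1 + m.+1 == p)%N : nat)%:R)); last first.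
  by move=> a _; rewrite E.
case: (leqP p (2 * m).+1) => H.
- have a0 : (p - m.+2 < m)%N by lia.
  rewrite (bigD1 (Ordinal a0)) //= big1 ?addr0.
    have -> : ((p - m.+2).+1 + m.+1 == p)%N by apply/eqP; lia.
    by [].
  move=> i ne; have -> : (i.+1 + m.+1 == p)%N = false; last by [].
  apply/negbTE/eqP => E2; move/eqP: ne; apply; apply: val_inj => /=; lia.
- rewrite big1 // => i _.
  have -> : (i.+1 + m.+1 == p)%N = false; last by [].
  apply/negbTE/eqP => E2; have := ltn_ord i; lia.
Qed.

Definition psi r : int := Num.max 0%R ((2 * r)%N%:Z - p%:Z + 1)%R.

Lemma S_inv r : (r < p)%N -> S1 p r + S2 p r = F r + psi r.
Proof.
have Hp : p = (2 * h + 1)%N.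
  have := odd_double_half p; rewrite hodd -muln2 /h; lia.
have p2 := p_gt2.
elim: r => [|r IH] rp.
  rewrite /S1 /S2 /F /A /D /psi !big_geq //; lia.
case: r IH rp => [|r] IH rp.
  rewrite S1E /S1' big_nat1 /delta /= /S2 big_geq // /F /A /D !big_nat1 /psi.
  lia.
rewrite S1E S2E // S_step // -S1E -S2E // IH; last by lia.
rewrite (F_succ r.+1).
have -> : \sum_(0 <= a < r.+1) g (a.+1 + r.+2) = \sum_(0 <= a < r.+1) legendre p (a.+1 + r.+2) - \sum_(0 <= a < r.+1) ((p %| a.+1 + r.+2)%N%:R : int).
  by rewrite -sumrB; apply: eq_bigr => a _; rewrite gE.
rewrite cnt //.
rewrite /psi; case: (leqP p (2 * r.+1).+1) => H; lia.
Qed.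
End NT.

Local Open Scope ring_scope.

Section Graph.
Variables (p n : nat).

Definition Gf (f : {perm 'I_n}) (u v : 'I_n) : int := g p ((f u).+1 + (f v).+1).

Lemma edge_count_sum f b :
  edge_count p (complete_graph n) f b =
  (\sum_(u : 'I_n) \sum_(v : 'I_n) [&& (u < v)%N & edge_label p f u v == b])%N.
Proof.
rewrite /edge_count -sum1_card big_mkcond /= pair_big /=.
apply: eq_bigr => [[u v]] _ /=; rewrite inE /= /complete_graph.
case: (ltnP u v) => h //=.
have -> : (u != v) by apply/eqP => E; rewrite E ltnn in h.
by case: (_ == b).
Qed.

Lemma diff_sum f :
  (edge_count p (complete_graph n) f true)%:Z - (edge_count p (complete_graph n) f false)%:Z
  = \sum_(u : 'I_n) \sum_(v : 'I_n) (if (u < v)%N then Gf f u v else 0).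
Proof.
rewrite -!natz !edge_count_sum !natr_sum -sumrB; apply: eq_bigr => u _.
rewrite !natr_sum -sumrB; apply: eq_bigr => v _.
rewrite /Gf /g /edge_label; case: (u < v)%N => /=; last by rewrite subrr.
by case: (legendre p _ == 1).
Qed.

Lemma sym_sum f :
  \sum_(u : 'I_n) \sum_(v : 'I_n) (if u != v then Gf f u v else 0)
  = 2 * \sum_(u : 'I_n) \sum_(v : 'I_n) (if (u < v)%N then Gf f u v else 0).
Proof.
have E1 : \sum_(u : 'I_n) \sum_(v : 'I_n) (if u != v then Gf f u v else 0)
  = \sum_(u : 'I_n) \sum_(v : 'I_n) (if (u < v)%N then Gf f u v else 0)
  + \sum_(u : 'I_n) \sum_(v : 'I_n) (if (v < u)%N then Gf f u v else 0).
  rewrite -big_split; apply: eq_bigr => u _; rewrite -big_split; apply: eq_bigr => v _ /=.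
  case: (ltngtP u v) => h /=; rewrite ?addr0 ?add0r.
  - by have -> : (u != v) by apply/eqP => E; rewrite E ltnn in h.
  - by have -> : (u != v) by apply/eqP => E; rewrite E ltnn in h.
  - by rewrite (val_inj h) eqxx.
have E2 : \sum_(u : 'I_n) \sum_(v : 'I_n) (if (v < u)%N then Gf f u v else 0)
  = \sum_(u : 'I_n) \sum_(v : 'I_n) (if (u < v)%N then Gf f u v else 0).
  rewrite exchange_big /=; apply: eq_bigr => v _; apply: eq_bigr => u _; rewrite /Gf addnC //.
rewrite E1 E2.
ring.
Qed.

Lemma perm_sum f :
  \sum_(u : 'I_n) \sum_(v : 'I_n) (if u != v then Gf f u v else 0)
  = \sum_(x : 'I_n) \sum_(y : 'I_n) (if x != y then g p (x.+1 + y.+1) else 0).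
Proof.
rewrite [in RHS](reindex_inj (@perm_inj _ f)) /=; apply: eq_bigr => u _.
rewrite [in RHS](reindex_inj (@perm_inj _ f)) /=; apply: eq_bigr => v _.
by rewrite /Gf (inj_eq (@perm_inj _ f)).
Qed.

Lemma id_sum :
  \sum_(x : 'I_n) \sum_(y : 'I_n) (if x != y then g p (x.+1 + y.+1) else 0) = F p n.
Proof.
rewrite /F /A /D !big_mkord -sumrB; apply: eq_bigr => x _.
rewrite big_mkord [in RHS](bigD1 x) //= [g p _ + _]addrC addrK [in RHS]big_mkcond /=.
by apply: eq_bigr => y _; rewrite eq_sym.
Qed.

Lemma count_diff f :
  2 * ((edge_count p (complete_graph n) f true)%:Z - (edge_count p (complete_graph n) f false)%:Z)
  = F p n.
Proof. by rewrite diff_sum -sym_sum perm_sum id_sum. Qed.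

End Graph.


Theorem theorem3p3 (p n : nat) (hp : prime p) (hodd : odd p) (hn : (1 <= n)%N) :
  let q := (n %/ p)%N in
  let r := (n - q * p)%N in
  let psi : int := Num.max 0%R ((2 * r)%:Z - p%:Z + 1)%R in
  let S : int := (S1 p r + S2 p r)%R in
  let X : int := ((2 * n * q)%:Z - (p * q ^ 2)%:Z - q%:Z + psi)%R in
  legendre_cordial p (complete_graph n) <->
  (S = X \/ S = (X + 2)%R \/ S = (X - 2)%R).
Proof.
move=> q r psi0 S X.
have p0 : (0 < p)%N by exact: prime_gt0.
have Hn : n = (r + q * p)%N.
  have := leq_divM n p; rewrite /r /q; lia.
have rp : (r < p)%N.
  rewrite /r /q {1}(divn_eq n p) [(_ + n %% p)%N]addnC addnK ltn_pmod //.
have HS : S = (F p r + psi p r)%R by rewrite /S S_inv.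
have HF : F p n = (F p r - (2 * r * q + p * q ^ 2)%N%:R + q%:R)%R.
  by rewrite Hn F_q.
have Hnat : (2 * n * q = (2 * r * q + p * q ^ 2) + p * q ^ 2)%N.
  rewrite Hn; ring.
have HSX : S = (X + F p n)%R.
  rewrite HS HF /X /psi0 /psi Hnat.
  rewrite !PoszD -!natz; ring.
split.
- move=> [f Hf]; have := count_diff p n f; move: Hf; rewrite /legendre_cordial_labeling.
  rewrite HSX; lia.
- move=> H; exists 1%g; rewrite /legendre_cordial_labeling.
  have := count_diff p n 1%g; move: H; rewrite HSX; lia.
Qed.
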